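(* Let $\mathcal{N}\subseteq\mathcal{M}$ be unital $C^*$-algebras with a common unit, and let $p_1,\ldots,p_n\in\mathcal{N}$ be mutually orthogonal projections with $p_1+\cdots+p_n=1$. Let $b\in\mathcal{M}$ and suppose that for each $k$ there exist $x_k\in p_k\mathcal{N}p_k$ and $y_k\in p_k\mathcal{M}p_k$ with $p_kbp_k=x_ky_k-y_kx_k$. Then there exist $d\in\mathcal{N}$ and $z\in\mathcal{M}$ with $b=dz-zd$. *)

(* Defs.v *)
From mathcomp Require Import all_boot all_algebra.
From mathcomp Require Import complex reals.
Set Implicit Arguments. Unset Strict Implicit. Unset Printing Implicit Defensive.
Import GRing.Theory Num.Theory.
Local Open Scope ring_scope.
Local Open Scope complex_scope.

Definition nconverges (R : realType) (A : lmodType R[i]) (nrm : A -> R)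
    (u : nat -> A) (l : A) : Prop :=
  forall e : R, 0 < e -> exists N : nat, forall n : nat, (N <= n)%N -> nrm (u n - l) < e.

Definition ncauchy (R : realType) (A : lmodType R[i]) (nrm : A -> R)
    (u : nat -> A) : Prop :=
  forall e : R, 0 < e -> exists N : nat, forall m n : nat,
    (N <= m)%N -> (N <= n)%N -> nrm (u m - u n) < e.

Definition is_Cstar_algebra (R : realType) (A : algType R[i])
    (star : A -> A) (nrm : A -> R) : Prop :=
  (forall x, star (star x) = x) /\
  (forall x y, star (x + y) = star x + star y) /\
  (forall (c : R[i]) x, star (c *: x) = c^* *: star x) /\
  (forall x y, star (x * y) = star y * star x) /\
  (forall x, 0 <= nrm x) /\ (forall x, nrm x = 0 -> x = 0) /\
  (forall x y, nrm (x + y) <= nrm x + nrm y) /\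
  (forall (c : R[i]) x, (nrm (c *: x))%:C = `|c| * (nrm x)%:C) /\
  (forall x y, nrm (x * y) <= nrm x * nrm y) /\
  (forall x, nrm (star x * x) = nrm x ^+ 2) /\
  (forall u : nat -> A, ncauchy nrm u -> exists l, nconverges nrm u l).

Definition is_unital_Cstar_subalgebra (R : realType) (A : algType R[i])
    (star : A -> A) (nrm : A -> R) (N : A -> Prop) : Prop :=
  N 1 /\
  (forall x y, N x -> N y -> N (x + y)) /\
  (forall (c : R[i]) x, N x -> N (c *: x)) /\
  (forall x y, N x -> N y -> N (x * y)) /\
  (forall x, N x -> N (star x)) /\
  (forall (u : nat -> A) l, (forall n, N (u n)) -> nconverges nrm u l -> N l).

Definition is_projection (R : realType) (A : algType R[i]) (star : A -> A)
    (p : A) : Prop := star p = p /\ p * p = p.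

(* Main.v *)
Require Import Defs.
From mathcomp Require Import all_boot all_algebra.
From mathcomp Require Import complex reals.
From mathcomp Require Import lra.
From Stdlib Require Import ClassicalEpsilon.
From mathcomp Require Import order.
Import Order.TTheory GRing.Theory Num.Theory.
Local Open Scope ring_scope.
Local Open Scope complex_scope.
Set Implicit Arguments.

Lemma nrm_scaleR (R : realType) (M : algType R[i]) (star : M -> M)
  (nrm : M -> R) (hM : is_Cstar_algebra star nrm) (r : R) (x : M) :
  nrm (r%:C *: x) = `|r| * nrm x.
Proof.
case: hM => _ [_ [_ [_ [_ [_ [_ [hscal _]]]]]]].
have := hscal r%:C x.
rewrite normc_def /= expr0n addr0 sqrtr_sqr -rmorphM.
by move/complexI.
Qed.

Lemma nrm0 (R : realType) (M : algType R[i]) (star : M -> M)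
  (nrm : M -> R) (hM : is_Cstar_algebra star nrm) : nrm 0 = 0.
Proof.
have := nrm_scaleR hM 0 0. by rewrite scaler0 normr0 mul0r.
Qed.

Lemma nrmN (R : realType) (M : algType R[i]) (star : M -> M)
  (nrm : M -> R) (hM : is_Cstar_algebra star nrm) (x : M) : nrm (- x) = nrm x.
Proof.
have := nrm_scaleR hM (-1) x. rewrite normrN normr1 mul1r rmorphN1 scaleN1r. done.
Qed.

Lemma nrmB (R : realType) (M : algType R[i]) (star : M -> M)
  (nrm : M -> R) (hM : is_Cstar_algebra star nrm) (x y : M) : nrm (x - y) = nrm (y - x).
Proof. by rewrite -(nrmN hM) opprB. Qed.

Lemma nrm_small0 (R : realType) (M : algType R[i]) (star : M -> M)
  (nrm : M -> R) (hM : is_Cstar_algebra star nrm) (w : M) :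
  (forall e : R, 0 < e -> nrm w < e) -> w = 0.
Proof.
case: hM => _ [_ [_ [_ [hge0 [hdef _]]]]] h.
apply: hdef. have := hge0 w. rewrite le_eqVlt => /orP[/eqP <- //|hp].
by have := h _ hp; rewrite ltxx.
Qed.

Lemma geom_bound (R : realType) (q : R) (N : nat) : 0 <= q -> q <= 2^-1 ->
  q ^+ N * N.+1%:R <= 1.
Proof.
move=> h0 h1; elim: N => [|N IH]; first by rewrite expr0 mul1r.
have hq : 0 <= q ^+ N by apply: exprn_ge0.
rewrite exprS -mulrA. rewrite -[N.+2]addn1 natrD.
rewrite -[N.+1]addn1 natrD in IH *. 
have hN : (0 : R) <= N%:R by apply: ler0n.
nra.
Qed.

Lemma sylv (R : realType) (M : algType R[i]) (star : M -> M)
  (nrm : M -> R) (hM : is_Cstar_algebra star nrm) (a e c : M) (mu : R) :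
  0 < mu -> 2 * (nrm a + nrm e) <= mu ->
  exists Z : M, mu%:C *: Z + a * Z - Z * e = c.
Proof.
move=> hmu hle.
have hM' := hM.
case: hM' => _ [_ [_ [_ [hge0 [hdef [htri [_ [hmul [_ hcomp]]]]]]]]].
pose q := (nrm a + nrm e) / mu.
have ha := hge0 a; have he := hge0 e.
have hq0 : 0 <= q by rewrite /q divr_ge0 // ?addr_ge0 // ltW.
have hq1 : q <= 2^-1.
  rewrite /q ler_pdivrMr //. lra.
pose S (x : M) := (- mu^-1)%:C *: (a * x - x * e).
have SB x y : S (x - y) = S x - S y.
  rewrite /S -scalerBr mulrBr mulrBl; congr (_ *: _).
  rewrite !opprD !opprK !addrA; congr (_ + _); rewrite addrAC //.
have Snrm x : nrm (S x) <= q * nrm x.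
  rewrite /S (nrm_scaleR hM) normrN ger0_norm; last by rewrite invr_ge0 ltW.
  have h1 : nrm (a * x - x * e) <= (nrm a + nrm e) * nrm x.
    apply: le_trans (htri _ _) _. rewrite (nrmN hM).
    rewrite mulrDl; apply: lerD; first exact: hmul.
    by apply: le_trans (hmul _ _) _; rewrite mulrC.
  have hmi : 0 <= mu^-1 by rewrite invr_ge0 ltW.
  rewrite /q; move: hmi h1; set t := mu^-1; set A := nrm _; move=> hmi h1. nra.
pose c0 := mu^-1%:C *: c.
pose u := fix f m := if m is m'.+1 then c0 + S (f m') else 0.
have uS m : u m.+1 = c0 + S (u m) by [].
pose C := nrm c0.
have hC : 0 <= C by apply: hge0.
have step m : nrm (u m.+1 - u m) <= q ^+ m * C.
  elim: m => [|m IH].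
    by rewrite /= subr0 /S mulr0 mul0r subr0 scaler0 addr0 expr0 mul1r.
  rewrite !uS opprD addrACA subrr add0r -SB.
  apply: le_trans (Snrm _) _. rewrite exprS -mulrA ler_wpM2l //.
have diff n k : nrm (u (n + k)%N - u n) <= 2 * C * (q ^+ n - q ^+ (n + k)%N).
  elim: k => [|k IH]; first by rewrite addn0 !subrr (nrm0 hM) mulr0.
  rewrite addnS.
  have -> : u (n + k)%N.+1 - u n = (u (n + k)%N.+1 - u (n + k)%N) + (u (n + k)%N - u n).
    by rewrite addrA subrK.
  apply: le_trans (htri _ _) _.
  apply: le_trans (lerD (step _) IH) _.
  rewrite exprS.
  have hqk : 0 <= q ^+ (n + k)%N by apply: exprn_ge0.
  have hh : 0 <= (C * q ^+ (n + k)%N) * (1 - 2 * q).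
    by apply: mulr_ge0; [apply: mulr_ge0 | lra].
  nra.
have diff2 n m : (n <= m)%N -> nrm (u m - u n) <= 2 * C * q ^+ n.
  move=> /subnKC <-. apply: le_trans (diff _ _) _.
  have : 0 <= q ^+ (n + (m - n))%N by apply: exprn_ge0.
  nra.
have cauchy : ncauchy nrm u.
  move=> eps heps.
  pose N := Num.Def.trunc (2 * C / eps).
  have hN : 2 * C / eps < N.+1%:R by apply: truncnS_gt.
  have hg := @geom_bound _ q N hq0 hq1.
  have hN' : 2 * C < eps * N.+1%:R.
    by rewrite [eps * _]mulrC -ltr_pdivrMr.
  have hqN : 2 * C * q ^+ N < eps.
    have hqN0 : 0 <= q ^+ N by apply: exprn_ge0.
    have hNp : (0 : R) < N.+1%:R by rewrite ltr0n.
    nra.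
  exists N => m n hm hn.
  have hmono k : (N <= k)%N -> 2 * C * q ^+ k <= 2 * C * q ^+ N.
    move=> hk; apply: ler_wpM2l; first lra.
    apply: ler_wiXn2l => //; lra.
  case: (leqP n m) => hnm.
    apply: le_lt_trans (diff2 _ _ hnm) _.
    exact: le_lt_trans (hmono _ hn) hqN.
  rewrite (nrmB hM).
  apply: le_lt_trans (diff2 _ _ (ltnW hnm)) _.
  exact: le_lt_trans (hmono _ hm) hqN.
have [Z hZ] := hcomp u cauchy.
exists Z.
have fix0 : Z - c0 - S Z = 0.
  apply: (nrm_small0 hM) => eps heps.
  have [N hN] := hZ (eps / 2) ltac:(by rewrite divr_gt0).
  have -> : Z - c0 - S Z = - (u N.+1 - Z) + S (u N - Z).
    by rewrite SB uS opprB opprD !addrA subrK.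
  apply: le_lt_trans (htri _ _) _.
  rewrite (nrmN hM).
  have h1 := hN N.+1 (leqnSn _).
  have h2 := hN N (leqnn _).
  have h3 := Snrm (u N - Z).
  have h4 := hge0 (u N - Z).
  nra.
have hZe : Z = c0 + S Z.
  by apply/eqP; rewrite -subr_eq0 opprD addrA; apply/eqP.
rewrite -addrA {1}hZe scalerDr /c0 /S !scalerA -!rmorphM mulrN mulfV ?gt_eqF //.
rewrite rmorph1 rmorphN1 scale1r scaleN1r.
by rewrite subrK.
Qed.

Lemma sylv2 (R : realType) (M : algType R[i]) (star : M -> M)
  (nrm : M -> R) (hM : is_Cstar_algebra star nrm) (a e c : M) (mu : R) :
  mu != 0 -> 2 * (nrm a + nrm e) <= `|mu| ->
  exists Z : M, mu%:C *: Z + a * Z - Z * e = c.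
Proof.
move=> hmu0 hle.
case: (ltrgt0P mu) hmu0 hle => hmu hmu0 hle; last by [].
  by apply: (sylv hM); rewrite ?gtr0_norm in hle.
have hmu' : 0 < - mu by rewrite oppr_gt0.
have hle' : 2 * (nrm (- a) + nrm (- e)) <= - mu by rewrite !(nrmN hM).
have [Z hZ] := @sylv _ _ _ _ hM (- a) (- e) (- c) (- mu) hmu' hle'.
exists Z; apply: oppr_inj; rewrite -hZ.
by rewrite rmorphN scaleNr mulNr mulrN !opprD !opprK.
Qed.

Lemma choice1 (I T : Type) (P : I -> T -> Prop) :
  (forall i, exists x, P i x) -> exists f : I -> T, forall i, P i (f i).
Proof.
move=> h.
exists (fun i => proj1_sig (constructive_indefinite_description _ (h i))).
move=> i; exact: proj2_sig (constructive_indefinite_description _ (h i)).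
Qed.

Lemma suml (M : pzRingType) n (p : 'I_n -> M) (F : 'I_n -> M) j w :
  (forall i j, i != j -> p i * p j = 0) -> (forall i, F i * p i = F i) ->
  p j * w = w -> (\sum_i F i) * w = F j * w.
Proof.
move=> horth hF hw; rewrite mulr_suml (bigD1 j) //= big1 ?addr0 // => i hij.
by rewrite -(hF i) -hw mulrA -[F i * p i * p j]mulrA horth // mulr0 mul0r.
Qed.

Lemma sumr (M : pzRingType) n (p : 'I_n -> M) (F : 'I_n -> M) k w :
  (forall i j, i != j -> p i * p j = 0) -> (forall i, p i * F i = F i) ->
  w * p k = w -> w * (\sum_i F i) = w * F k.
Proof.
move=> horth hF hw; rewrite mulr_sumr (bigD1 k) //= big1 ?addr0 // => i hik.
rewrite -(hF i) -hw -mulrA [p k * (p i * F i)]mulrA horth 1?eq_sym //.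
by rewrite mul0r mulr0.
Qed.

Lemma zmod4 (V : zmodType) (a b c d : V) : a + b - (c + d) = b - d + a - c.
Proof. by rewrite opprD addrACA addrC addrA. Qed.

Unset Implicit Arguments.

Theorem lemma3p15 (R : realType) (M : algType R[i]) (star : M -> M)
  (nrm : M -> R) (N : M -> Prop)
  (hM : is_Cstar_algebra star nrm)
  (hN : is_unital_Cstar_subalgebra star nrm N)
  (n : nat) (p : 'I_n -> M)
  (hpN : forall k, N (p k))
  (hproj : forall k, is_projection star (p k))
  (horth : forall j k, j != k -> p j * p k = 0)
  (hsum : \sum_(k < n) p k = 1)
  (b : M)
  (hb : forall k, exists x y : M,
      (exists u, N u /\ x = p k * u * p k) /\
      (exists v, y = p k * v * p k) /\
      p k * b * p k = x * y - y * x) :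
  exists d z : M, N d /\ b = d * z - z * d.
Proof.
case: hN => hN1 [hNadd [hNscal [hNmul _]]].
have hN0 : N 0 by have := hNscal 0 1 hN1; rewrite scale0r.
have Nsum (F : 'I_n -> M) : (forall i, N (F i)) -> N (\sum_i F i).
  move=> hF; apply: (big_ind N) => //.
have pp k : p k * p k = p k by case: (hproj k).
have hb2 : forall k, exists xy : M * M,
      (exists u, N u /\ xy.1 = p k * u * p k) /\
      (exists v, xy.2 = p k * v * p k) /\
      p k * b * p k = xy.1 * xy.2 - xy.2 * xy.1.
  move=> k; have [x [y h]] := hb k; by exists (x, y).
have [f hf] := choice1 _ hb2.
pose xs k := (f k).1. pose ys k := (f k).2.
have hNx k : N (xs k).
  rewrite /xs /ys. have [[u [hu ->]] _] := hf k. by apply: (hNmul) => //; apply: (hNmul).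
have hxL k : p k * xs k = xs k.
  rewrite /xs /ys. have [[u [hu ->]] _] := hf k. by rewrite !mulrA pp.
have hxR k : xs k * p k = xs k.
  rewrite /xs /ys. have [[u [hu ->]] _] := hf k. by rewrite -!mulrA pp.
have hyL k : p k * ys k = ys k.
  rewrite /xs /ys. have [_ [[v ->] _]] := hf k. by rewrite !mulrA pp.
have hyR k : ys k * p k = ys k.
  rewrite /xs /ys. have [_ [[v ->] _]] := hf k. by rewrite -!mulrA pp.
have hdiag k : p k * b * p k = xs k * ys k - ys k * xs k.
  rewrite /xs /ys; by have [_ [_ ->]] := hf k.
case: (hM) => _ [_ [_ [_ [hge0 _]]]].
pose Sx := \sum_k nrm (xs k).
have hxle k : nrm (xs k) <= Sx.
  rewrite /Sx (bigD1 k) //= lerDl; apply: sumr_ge0 => i _; exact: hge0.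
have hSx : 0 <= Sx by apply: sumr_ge0 => i _; exact: hge0.
pose K := 1 + 4 * Sx.
pose lam (k : 'I_n) := (k%:R * K : R).
have hW : forall jk : 'I_n * 'I_n, exists W : M, jk.1 != jk.2 ->
    p jk.1 * W = W /\ W * p jk.2 = W /\
    (lam jk.1 - lam jk.2)%:C *: W + xs jk.1 * W - W * xs jk.2 = p jk.1 * b * p jk.2.
  case=> j k /=.
  case: (boolP (j != k)) => hjk; last by exists 0.
  have hmu : 1 <= `|(j%:R - k%:R : R)|.
    rewrite ler_normr; case: (ltngtP j k) => h.
    - apply/orP; right; rewrite opprB lerBrDr addrC natr1 ler_nat //.
    - apply/orP; left; rewrite lerBrDr addrC natr1 ler_nat //.
    - by move: hjk; rewrite (val_inj h) eqxx.
  have hmu' : K <= `|lam j - lam k|.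
    rewrite /lam -mulrBl normrM (ger0_norm (x := K)); last by rewrite /K; lra.
    rewrite -[X in X <= _]mul1r ler_wpM2r //; rewrite /K; lra.
  have hmu0 : lam j - lam k != 0.
    rewrite -normr_gt0; apply: lt_le_trans hmu'; rewrite /K; lra.
  have hle : 2 * (nrm (xs j) + nrm (xs k)) <= `|lam j - lam k|.
    apply: le_trans hmu'; have := hxle j; have := hxle k; rewrite /K; lra.
  have [W0 hW0] := sylv2 hM (xs j) (xs k) (p j * b * p k) (lam j - lam k) hmu0 hle.
  exists (p j * W0 * p k) => _.
  split; first by rewrite !mulrA pp.
  split; first by rewrite -!mulrA pp.
  have E := congr1 (fun t => p j * t * p k) hW0; move: E => /=.
  rewrite !mulrA pp -!mulrA pp !mulrA => <-.
  have hs (cc : R[i]) (w : M) : p j * (cc *: w) * p k = cc *: (p j * w * p k).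
    by rewrite -scalerAr -scalerAl.
  rewrite mulrBr mulrDr mulrBl mulrDl hs.
  congr (_ + _ - _).
  - by rewrite hxR !mulrA hxL.
  - by rewrite -!mulrA hxL hxR.
have [Wf hWf] := choice1 _ hW.
pose X := \sum_k xs k. pose Y := \sum_k ys k.
pose D := \sum_k (lam k)%:C *: p k.
pose Z := \sum_j \sum_(k | k != j) Wf (j, k).
exists (X + D), (Y + Z); split.
  apply: hNadd; apply: Nsum => // k; exact: hNscal.
have hDp i : (lam i)%:C *: p i * p i = (lam i)%:C *: p i by rewrite -scalerAl pp.
have hpD i : p i * ((lam i)%:C *: p i) = (lam i)%:C *: p i by rewrite -scalerAr pp.
have Xl k w : p k * w = w -> X * w = xs k * w.
  exact: (suml _ p xs k horth hxR).
have Xr k w : w * p k = w -> w * X = w * xs k.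
  exact: (sumr _ p xs k horth hxL).
have Dl k w : p k * w = w -> D * w = (lam k)%:C *: w.
  move=> hw; rewrite (suml _ p (fun i => (lam i)%:C *: p i) k horth hDp hw).
  by rewrite -scalerAl hw.
have Dr k w : w * p k = w -> w * D = (lam k)%:C *: w.
  move=> hw; rewrite (sumr _ p (fun i => (lam i)%:C *: p i) k horth hpD hw).
  by rewrite -scalerAr hw.
have XY : X * Y = \sum_k xs k * ys k.
  by rewrite /Y mulr_sumr; apply: eq_bigr => k _; rewrite (Xl k).
have YX : Y * X = \sum_k ys k * xs k.
  by rewrite /Y mulr_suml; apply: eq_bigr => k _; rewrite (Xr k).
have DY : D * Y = Y * D.
  rewrite /Y mulr_sumr mulr_suml; apply: eq_bigr => k _.
  by rewrite (Dl k) // (Dr k).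
have offd j k : j != k ->
    (X + D) * Wf (j, k) - Wf (j, k) * (X + D) = p j * b * p k.
  move=> hjk; have [hL [hR E]] := hWf (j, k) hjk; move: hL hR E => /= hL hR E.
  rewrite mulrDl mulrDr (Xl j) // (Dl j) // (Xr k) // (Dr k) //.
  by rewrite -E rmorphB scalerBl zmod4.
have hbdec : b = \sum_j p j * b * p j + \sum_j \sum_(k | k != j) p j * b * p k.
  rewrite -big_split /=.
  rewrite -{1}[b]mul1r -{1}[b]mulr1 -hsum mulr_suml; apply: eq_bigr => j _.
  rewrite mulr_sumr (bigD1 j) //= mulrDr mulr_sumr mulrA; congr (_ + _).
  by apply: eq_bigr => k _; rewrite mulrA.
have -> : (X + D) * (Y + Z) - (Y + Z) * (X + D) =
    ((X + D) * Y - Y * (X + D)) + ((X + D) * Z - Z * (X + D)).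
  by rewrite [(X + D) * _]mulrDr [(Y + Z) * _]mulrDl opprD addrACA.
have -> : (X + D) * Y - Y * (X + D) = \sum_j p j * b * p j.
  rewrite mulrDl mulrDr DY opprD addrACA subrr addr0 XY YX -sumrB.
  by apply: eq_bigr => k _; rewrite hdiag.
have -> : (X + D) * Z - Z * (X + D) = \sum_j \sum_(k | k != j) p j * b * p k.
  rewrite /Z mulr_sumr mulr_suml -sumrB; apply: eq_bigr => j _.
  rewrite mulr_sumr mulr_suml -sumrB; apply: eq_bigr => k hk.
  by rewrite offd // eq_sym.
exact: hbdec.
Qed.
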